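(* Let $M,n\geq 3$ be integers with $n$ odd, and let $\beta$ be an integer with $0\leq\beta\leq n$ and $\beta\neq 1$. Then $(n-\beta,\beta)\in \mathrm{HWP}(C_M[n];M,Mn)$; that is, $C_M[n]$ can be factorized into $n-\beta$ $C_M$-factors and $\beta$ $C_{Mn}$-factors.
   Context: $C_M[n]$ denotes the lexicographic product of the $M$-cycle with the empty graph on $n$ vertices: vertex set $\mathbb Z_M\times\mathbb Z_n$, with $(i,x)(j,y)$ an edge iff $j-i\equiv\pm1\pmod M$. A $C_k$-factor of a graph $G$ is a spanning subgraph of $G$ all of whose components are cycles of length $k$. For a graph $G$ and integers $M,N\ge3$, $\mathrm{HWP}(G;M,N)$ is the set of pairs $(\alpha,\beta)$ of nonnegative integers such that $G$ admits a set of $\alpha$ $C_M$-factors and $\beta$ $C_N$-factors whose edge sets partition $E(G)$. *)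

(* Defs.v *)
From mathcomp Require Import all_boot.
Set Implicit Arguments. Unset Strict Implicit. Unset Printing Implicit Defensive.

Section Graphs.
Variable V : finType.

(* A simple graph on V is given by a symmetric irreflexive relation g.
   Edges are represented as 2-element vertex sets {x, y}. *)
Definition edgeset (g : rel V) : {set {set V}} :=
  [set [set p.1; p.2] | p in [set p : V * V | g p.1 p.2]].

Definition cycle_edges (c : seq V) : {set {set V}} :=
  [set [set x; next c x] | x in c].

Definition is_kcycle (g : rel V) (k : nat) (c : seq V) : bool :=
  [&& size c == k, uniq c & cycle g c].

Definition Ck_factor (g : rel V) (k : nat) (F : {set {set V}}) : Prop :=
  exists cs : seq (seq V),
    all (is_kcycle g k) cs /\
    (forall v : V, count (fun c => v \in c) cs = 1) /\
    F = \bigcup_(c <- cs) cycle_edges c.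

(* (a, b) \in HWP(g; M, N): a C_M-factors and b C_N-factors whose edge sets
   partition E(g). *)
Definition HWP (g : rel V) (M N : nat) (ab : nat * nat) : Prop :=
  exists (FM : 'I_ab.1 -> {set {set V}}) (FN : 'I_ab.2 -> {set {set V}}),
    (forall i, Ck_factor g M (FM i)) /\
    (forall j, Ck_factor g N (FN j)) /\
    (forall e, e \in edgeset g ->
       #|[set i | e \in FM i]| + #|[set j | e \in FN j]| = 1).

End Graphs.

Definition CMn (M n : nat) : rel ('I_M * 'I_n) :=
  fun u v => ((v.1 : nat) == (u.1 + 1) %% M) || ((u.1 : nat) == (v.1 + 1) %% M).
Arguments CMn M n : clear implicits.
Arguments HWP {V} g M N ab.
Arguments Ck_factor {V} g k F.

(* Main.v *)
Require Import Defs.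
From mathcomp Require Import all_boot zify.
Set Implicit Arguments. Unset Strict Implicit. Unset Printing Implicit Defensive.

Lemma iota_rcons m k : rcons (iota m k) (m + k) = iota m (k + 1).
Proof. by rewrite iotaD cats1. Qed.

Section GenCycle.
Variables (V : finType) (g : rel V) (f : nat -> V) (N : nat).
Hypotheses (HN : 0 < N) (Hper : f N = f 0)
  (Hstep : forall j, j < N -> g (f j) (f j.+1))
  (Hinj : forall j j', j < N -> j' < N -> f j = f j' -> j = j').

Let c := map f (iota 0 N).

Lemma gc_uniq : uniq c.
Proof.
rewrite /c map_inj_in_uniq ?iota_uniq // => j j'; rewrite !mem_iota /= !add0n.
exact: Hinj.
Qed.

Lemma gc_size : size c = N.
Proof. by rewrite /c size_map size_iota. Qed.

Lemma gc_eq : c = f 0 :: map f (iota 1 N.-1).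
Proof. by rewrite /c; case: N HN. Qed.

Lemma gc_cycle : cycle g c.
Proof.
rewrite gc_eq /=.
have -> : rcons (map f (iota 1 N.-1)) (f 0) = map f (iota 1 N).
  rewrite -Hper -map_rcons; congr map; case: N HN => // N' _.
  by rewrite (iota_rcons 1 N') addn1.
apply/(pathP (f 0)) => i; rewrite size_map size_iota => hi.
rewrite -[f 0 :: _]/(map f (0 :: iota 1 N)).
rewrite (nth_map 0) /=; last by rewrite size_iota ltnW.
rewrite (nth_map 0) ?size_iota //.
case: i hi => [|i] hi /=; first by rewrite nth_iota // ; apply: Hstep.
rewrite !nth_iota ?add1n; try lia. by apply: Hstep; lia.
Qed.

Lemma gc_next j : j < N -> next c (f j) = f j.+1.
Proof.
move=> hj.
have hin : f j \in c by apply: map_f; rewrite mem_iota.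
rewrite next_nth hin.
have hidx : index (f j) c = j.
  have -> : f j = nth (f 0) c j by rewrite /c (nth_map 0) ?size_iota // nth_iota.
  by rewrite index_uniq ?gc_size // gc_uniq.
rewrite hidx gc_eq.
case: (ltnP j N.-1) => hj'.
  by rewrite (nth_map 0) ?size_iota // nth_iota.
have -> : j = N.-1 by lia.
rewrite nth_default ?size_map ?size_iota //.
by rewrite -Hper; case: N HN.
Qed.

Lemma gc_edges e :
  e \in cycle_edges c -> exists2 j, j < N & e = [set f j; f j.+1].
Proof.
case/imsetP => x /mapP [j]; rewrite mem_iota add0n => /andP [_ hj] -> ->.
by exists j => //; rewrite gc_next.
Qed.

Lemma gc_edges2 j : j < N -> [set f j; f j.+1] \in cycle_edges c.
Proof.
move=> hj; rewrite -gc_next //; apply: imset_f; apply: map_f.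
by rewrite mem_iota.
Qed.

End GenCycle.

Lemma mul_inj n u q q' : 0 < n -> coprime u n -> q < n -> q' < n ->
  (q * u) %% n = (q' * u) %% n -> q = q'.
Proof.
move=> n0 cu.
wlog le : q q' / q <= q'.
  move=> W hq hq' h; case: (leqP q q') => l; first exact: W.
  by symmetry; apply: W => //; apply: ltnW.
move=> hq hq' /eqP; rewrite eq_sym eqn_mod_dvd ?leq_mul2r ?le ?orbT //.
rewrite -mulnBl Gauss_dvdl; last by rewrite coprime_sym.
case h : (q' - q) => [|d]; first by move=> _; lia.
move/(dvdn_leq (ltn0Sn d)) => hd; lia.
Qed.

Lemma surj_mod n (h : nat -> nat) : 0 < n ->
  (forall k k', k < n -> k' < n -> h k %% n = h k' %% n -> k = k') ->
  forall y, y < n -> exists2 k, k < n & h k %% n = y.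
Proof.
case: n => // n _ hinj y hy.
pose F : 'I_n.+1 -> 'I_n.+1 := fun k => inord (h k %% n.+1).
have Finj : injective F.
  move=> k k' /(congr1 val); rewrite /F /= !inordK ?ltn_mod // => /hinj e.
  by apply: val_inj; apply: e.
case/codomP: (injF_onto Finj (Ordinal hy)) => k /(congr1 val) /=.
by rewrite inordK ?ltn_mod // => ->; exists k.
Qed.

Lemma mem_bigcup_seq (T : finType) (I : Type) (s : seq I) (F : I -> {set T}) x :
  (x \in \bigcup_(c <- s) F c) = has (fun c => x \in F c) s.
Proof.
elim: s => [|c s IH]; first by rewrite big_nil in_set0.
by rewrite big_cons in_setU IH.
Qed.

Lemma set2_cases (T : finType) (u v A B : T) : u != v ->
  [set u; v] = [set A; B] -> (u = A /\ v = B) \/ (u = B /\ v = A).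
Proof.
move=> neq h.
have hu : u \in [set A; B] by rewrite -h set21.
have hv : v \in [set A; B] by rewrite -h set22.
move: hu hv; rewrite !inE => /orP [] /eqP hu /orP [] /eqP hv.
- by move: neq; rewrite hu hv eqxx.
- by left.
- by right.
- by move: neq; rewrite hu hv eqxx.
Qed.

Section Frame.
Variables m' n' beta : nat.
Local Notation M := m'.+1.
Local Notation n := n'.+1.
Variable a : nat -> nat -> nat.

Definition mk (i y : nat) : 'I_M * 'I_n := (inord (i %% M), inord (y %% n)).
Definition P k i := \sum_(0 <= l < i) a k l.
Definition S k := P k M.
Definition fv k x j := mk j (x + j %/ M * S k + P k (j %% M)).
Definition Lk k := if k < beta then n else 1.
Definition xs k := if k < beta then [:: 0] else iota 0 n.
Definition cyc k x := map (fv k x) (iota 0 (M * Lk k)).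
Definition cs k := map (cyc k) (xs k).
Definition E k := \bigcup_(c <- cs k) cycle_edges c.

Hypotheses (HM : 2 < M) (Hb : beta <= n)
 (Ha : forall i k k', i < M -> k < n -> k' < n -> a k i %% n = a k' i %% n -> k = k')
 (HS0 : forall k, beta <= k -> k < n -> S k %% n = 0)
 (HS1 : forall k, k < beta -> coprime (S k) n).

Lemma mk1 i y : ((mk i y).1 : nat) = i %% M.
Proof. by rewrite /mk /= inordK // ltn_mod. Qed.
Lemma mk2 i y : ((mk i y).2 : nat) = y %% n.
Proof. by rewrite /mk /= inordK // ltn_mod. Qed.

Lemma mk_eq i y i' y' : i %% M = i' %% M -> y %% n = y' %% n -> mk i y = mk i' y'.
Proof. by rewrite /mk => -> ->. Qed.

Lemma mk_eqE i y i' y' : mk i y = mk i' y' -> i %% M = i' %% M /\ y %% n = y' %% n.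
Proof. by move=> h; rewrite -(mk1 i y) -(mk1 i' y') -(mk2 i y) -(mk2 i' y') h. Qed.

Lemma mk_modl i y : mk (i %% M) y = mk i y.
Proof. by apply: mk_eq; rewrite ?modn_mod. Qed.

Lemma mkV (v : 'I_M * 'I_n) : mk v.1 v.2 = v.
Proof.
case: v => i y; rewrite /mk /= !modn_small //.
by congr pair; apply: val_inj; rewrite /= inordK.
Qed.

Lemma P0 k : P k 0 = 0.
Proof. by rewrite /P big_geq. Qed.

Lemma PS k r : P k r.+1 = P k r + a k r.
Proof. by rewrite /P big_nat_recr. Qed.

Lemma step k x j :
  fv k x j.+1 = mk (j %% M).+1 (x + j %/ M * S k + P k (j %% M) + a k (j %% M)).
Proof.
rewrite /fv.
have hj := divn_eq j M.
have hr : j %% M < M by rewrite ltn_mod.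
case: (ltnP (j %% M).+1 M) => hr'.
  have e : j.+1 = j %/ M * M + (j %% M).+1 by rewrite {1}hj addnS.
  rewrite e divnMDl // (divn_small hr') addn0 modnMDl (modn_small hr') PS addnA.
  by apply: mk_eq; rewrite ?modnMDl.
have eM : (j %% M).+1 = M by apply/eqP; rewrite eqn_leq hr' andbT.
have e : j.+1 = (j %/ M).+1 * M by rewrite {1}hj -addnS eM mulSn addnC.
rewrite e mulnK // modnMl P0 addn0 eM.
apply: mk_eq; first by rewrite modnMl modnn.
by rewrite -addnA -PS eM -/(S k) mulSn [S k + _]addnC addnA.
Qed.

Lemma mk_adj i y z : CMn M n (mk i y) (mk i.+1 z).
Proof. by rewrite /CMn !mk1 modnDml addn1 eqxx. Qed.

Lemma LS0 k : k < n -> (Lk k * S k) %% n = 0.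
Proof.
by rewrite /Lk; case: ifP => h hk; [rewrite modnMr | rewrite mul1n HS0 // leqNgt h].
Qed.

Lemma fv_per k x : k < n -> fv k x (M * Lk k) = fv k x 0.
Proof.
move=> hk; rewrite /fv modnMr mulKn // P0 div0n mul0n !addn0.
apply: mk_eq; first by rewrite modnMr mod0n.
by rewrite -modnDmr LS0 // addn0.
Qed.

Lemma fv_inj k x j j' : k < n -> j < M * Lk k -> j' < M * Lk k ->
  fv k x j = fv k x j' -> j = j'.
Proof.
move=> hk hj hj' /mk_eqE [er ev].
move: ev; rewrite -er => /eqP; rewrite eqn_modDr eqn_modDl => /eqP ev.
have q : j %/ M = j' %/ M.
  have hq : j %/ M < Lk k by rewrite ltn_divLR // mulnC.
  have hq' : j' %/ M < Lk k by rewrite ltn_divLR // mulnC.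
  move: hq hq'; rewrite /Lk; case: ifP => hb hq hq'.
    by apply: (@mul_inj n (S k)) => //; apply: HS1.
  by move: hq hq'; rewrite !ltnS !leqn0 => /eqP -> /eqP ->.
by rewrite (divn_eq j M) (divn_eq j' M) q er.
Qed.

Lemma exist_pos k (v : 'I_M * 'I_n) : k < n ->
  exists2 x, x \in xs k & exists2 j, j < M * Lk k & fv k x j = v.
Proof.
move=> hk; case: v => i y.
have hi : (i : nat) < M by [].
have hy : (y : nat) < n by [].
rewrite /xs /Lk; case: ifP => hb.
  have [q hq hqe] : exists2 q, q < n & (q * S k + P k i) %% n = y.
    apply: surj_mod => // q q' hq hq' /eqP; rewrite eqn_modDr => /eqP.
    by apply: (@mul_inj n (S k)) => //; apply: HS1.
  exists 0; first by rewrite inE.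
  exists (q * M + i).
    have : q * M + i < q.+1 * M by rewrite mulSn addnC ltn_add2r.
    move=> h; apply: (leq_trans h); rewrite mulnC leq_mul2l hq orbT //.
  rewrite -(mkV (i, y)) /fv divnMDl // divn_small // addn0 modnMDl modn_small //.
  apply: mk_eq; first by rewrite modnMDl.
  by rewrite /= add0n hqe modn_small.
set p := P k i.
exists ((y + (n - p %% n)) %% n); first by rewrite mem_iota ltn_mod.
exists i; first by rewrite muln1.
rewrite -(mkV (i, y)) /fv (divn_small hi) mul0n addn0 (modn_small hi).
apply: mk_eq => //=.
rewrite modnDml -/p -modnDmr.
rewrite -addnA subnK; last by apply: ltnW; rewrite ltn_mod.
by rewrite modnDr.
Qed.

Lemma uniq_pos k x x' j j' : beta <= k -> x < n -> x' < n -> j < M -> j' < M ->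
  fv k x j = fv k x' j' -> x = x'.
Proof.
move=> hb hx hx' hj hj' /mk_eqE [].
rewrite (modn_small hj) (modn_small hj') => ej.
rewrite ej (divn_small hj') !mul0n !addn0.
by move/eqP; rewrite eqn_modDr (modn_small hx) (modn_small hx') => /eqP.
Qed.

Lemma cover k v : k < n -> count (fun c => v \in c) (cs k) = 1.
Proof.
move=> hk; have [x hx [j hj hfv]] := exist_pos v hk.
move: hx hj; rewrite /cs /xs /Lk; case: ifP => hb.
  rewrite inE => /eqP xe hj /=; rewrite addn0; subst x.
  suff -> : v \in cyc k 0 by [].
  by apply/mapP; exists j; rewrite ?hfv // mem_iota add0n /Lk hb.
move=> hx hj; rewrite count_map (@eq_in_count _ _ (pred1 x)).
  by rewrite count_uniq_mem ?iota_uniq // hx.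
move=> x' hx' /=; apply/mapP/eqP.
  case=> j'; rewrite mem_iota add0n /Lk hb muln1 => hj' e.
  move: hx hx'; rewrite !mem_iota !add0n => hx hx'.
  apply: (@uniq_pos k x' x j' j) => //; first by rewrite leqNgt hb.
    by rewrite -(muln1 M).
  by rewrite -e hfv.
by move=> ->; exists j; rewrite ?hfv // mem_iota add0n /Lk hb.
Qed.

Lemma factor k : k < n -> Ck_factor (CMn M n) (M * Lk k) (E k).
Proof.
move=> hk; exists (cs k); split; last split => //.
  apply/allP => c /mapP [x _ ->].
  have hN : 0 < M * Lk k by rewrite muln_gt0 /Lk; case: ifP.
  rewrite /is_kcycle /cyc size_map size_iota eqxx /=.
  have hinj : forall j j', j < M * Lk k -> j' < M * Lk k -> fv k x j = fv k x j' -> j = j'.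
    by move=> j j'; apply: fv_inj.
  have hst : forall j, j < M * Lk k -> CMn M n (fv k x j) (fv k x j.+1).
    by move=> j _; rewrite step {1}/fv -mk_modl; apply: mk_adj.
  by rewrite (gc_uniq hinj) (gc_cycle hN (fv_per x hk) hst).
by move=> v; apply: cover.
Qed.

Lemma E_sub k e : k < n -> e \in E k ->
  exists i, exists w, i < M /\ e = [set mk i w; mk i.+1 (w + a k i)].
Proof.
move=> hk; rewrite /E mem_bigcup_seq => /hasP [c /mapP [x _ ->]].
have hN : 0 < M * Lk k by rewrite muln_gt0 /Lk; case: ifP.
have hinj : forall j j', j < M * Lk k -> j' < M * Lk k -> fv k x j = fv k x j' -> j = j'.
  by move=> j j'; apply: fv_inj.
case/(gc_edges hN (fv_per x hk) hinj) => j hj ->.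
exists (j %% M), (x + j %/ M * S k + P k (j %% M)); split; first by rewrite ltn_mod.
by rewrite step /fv; congr [set _; _]; apply: mk_eq; rewrite ?modn_mod.
Qed.

Lemma E_sup k i w : k < n -> i < M -> [set mk i w; mk i.+1 (w + a k i)] \in E k.
Proof.
move=> hk hi; have [x hx [j hj hfv]] := exist_pos (mk i w) hk.
have hN : 0 < M * Lk k by rewrite muln_gt0 /Lk; case: ifP.
rewrite /E mem_bigcup_seq; apply/hasP; exists (cyc k x); first exact: map_f.
have hinj : forall j j', j < M * Lk k -> j' < M * Lk k -> fv k x j = fv k x j' -> j = j'.
  by move=> j1 j2; apply: fv_inj.
have := (gc_edges2 hN (fv_per x hk) hinj hj).
have [e1 e2] := mk_eqE hfv.
rewrite hfv step; move: e1; rewrite (modn_small hi) => e1.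
rewrite e1 in e2 *.
suff -> : mk i.+1 (x + j %/ M * S k + P k i + a k i) = mk i.+1 (w + a k i) by [].
apply: mk_eq => //; by rewrite -modnDml e2 modnDml.
Qed.


Lemma modD_neq x d : x < M -> 0 < d < M -> (x + d) %% M != x.
Proof.
move=> hx /andP [d0 dM]; apply/eqP => /eqP.
rewrite -{2}(modn_small hx) -{2}(addn0 x) eqn_modDl mod0n (modn_small dM).
by move/eqP=> e; rewrite e in d0.
Qed.

Lemma edge_norm e : e \in edgeset (CMn M n) ->
  exists u : 'I_M * 'I_n, exists v : 'I_M * 'I_n, e = [set u; v] /\ (v.1 : nat) = (u.1 + 1) %% M.
Proof.
case/imsetP => p; rewrite inE /CMn => /orP [] /eqP h ->.
  by exists p.1, p.2.
by exists p.2, p.1; rewrite setUC.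
Qed.

Lemma E_char k (u v : 'I_M * 'I_n) : k < n -> (v.1 : nat) = (u.1 + 1) %% M ->
  ([set u; v] \in E k) = ((u.2 + a k u.1) %% n == v.2).
Proof.
move=> hk hv; apply/idP/eqP.
  case/(E_sub hk) => i [w [hi he]].
  have neq : u != v.
    apply/eqP => uv; move: hv; rewrite uv => /eqP.
    by rewrite eq_sym (negbTE (modD_neq (ltn_ord _) _)) //= ltnS ltnW.
  case: (set2_cases neq he) => [[hu hv'] | [hu hv']].
    by rewrite hu hv' mk1 !mk2 (modn_small hi) modnDml.
  move: hv; rewrite hu hv' !mk1 (modn_small hi) modnDml => /eqP.
  rewrite (_ : i.+1 + 1 = i + 2); last by lia.
  by rewrite eq_sym (negbTE (modD_neq hi _)).
move=> h; have := @E_sup k u.1 u.2 hk (ltn_ord _).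
rewrite mkV; suff -> : mk (u.1).+1 (u.2 + a k u.1) = v by [].
rewrite -(mkV v); apply: mk_eq.
  by rewrite (modn_small (ltn_ord v.1)) hv addn1.
by rewrite h (modn_small (ltn_ord v.2)).
Qed.

Lemma card_shift m d c (Q : 'I_m -> bool) :
  (forall i : 'I_m, Q i = (d + i == c)) ->
  #|[set i | Q i]| = ((d <= c) && (c < d + m)).
Proof.
move=> hQ; case: (boolP ((d <= c) && (c < d + m))) => h.
  have hc : c - d < m by move/andP: h => [h1 h2]; lia.
  rewrite (_ : [set i | Q i] = [set Ordinal hc]) ?cards1 //.
  apply/setP => i; rewrite !inE hQ; apply/eqP/eqP => [e|e].
    by apply: val_inj => /=; move/andP: h => [h1 h2]; lia.
  by rewrite e /=; move/andP: h => [h1 h2]; lia.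
rewrite (_ : [set i | Q i] = set0) ?cards0 //.
apply/setP => i; rewrite !inE hQ; apply/negbTE/eqP => e; move: h.
by rewrite -e leq_addr /= ltn_add2l ltn_ord.
Qed.

Theorem frame_HWP : HWP (CMn M n) M (M * n) (n - beta, beta).
Proof.
exists (fun i : 'I_(n - beta) => E (beta + i)), (fun j : 'I_beta => E j).
split; [|split].
- move=> i /=.
  have hk : beta + i < n by move: (ltn_ord i) => /= hi; lia.
  by have := factor hk; rewrite /Lk ltnNge leq_addr /= muln1.
- move=> j /=.
  have hk : (j : nat) < n := leq_trans (ltn_ord j) Hb.
  by have := factor hk; rewrite /Lk ltn_ord.
move=> e /edge_norm [u [v [-> hv]]].
have [k0 hk0 hk0e] : exists2 k0, k0 < n & (u.2 + a k0 u.1) %% n = v.2.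
  apply: surj_mod => // k k' hk hk' /eqP; rewrite eqn_modDl => /eqP.
  exact: Ha.
have hE : forall k, k < n -> ([set u; v] \in E k) = (k == k0).
  move=> k hk; rewrite E_char //; apply/eqP/eqP => [h|->//].
  apply: (Ha (i := u.1)) => //; apply/eqP; rewrite -(eqn_modDl u.2).
  by rewrite h hk0e.
rewrite (@card_shift _ beta k0) => [|i]; last first.
  by rewrite hE //; move: (ltn_ord i) => /= hi; lia.
rewrite (@card_shift _ 0 k0) => [|i]; last first.
  by rewrite add0n hE // (leq_trans (ltn_ord i) Hb).
rewrite /=; case: (ltnP k0 beta) => hb /=.
  by [].
by rewrite subnKC // hk0.
Qed.

End Frame.

Lemma coprime_nm2 n : 2 < n -> n %% 2 = 1 -> coprime (n - 2) n.
Proof.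
move=> h2 ho; have e : n = (n - 2) + 2 by lia.
rewrite /coprime {2}e gcdnDl -/(coprime (n - 2) 2) coprimen2.
have : (n - 2) %% 2 = 1 by lia.
by rewrite modn2; case: odd.
Qed.

Lemma coprime_nm1 n : 0 < n -> coprime (n - 1) n.
Proof. by case: n => // n _; rewrite subn1 /= coprimenS. Qed.

Section Conc.
Variables m' n' beta : nat.
Local Notation M := m'.+1.
Local Notation n := n'.+1.
Hypotheses (HM : 2 < M) (Hn : 2 < n) (Hodd : n %% 2 = 1) (Hb : beta <= n)
  (Hb1 : beta != 1).

Definition gg k := if k < beta then
  (if (beta %% 2 == 1) && (k < 3) then (if k == 2 then 0 else k.+1)
   else if k %% 2 == beta %% 2 then k.+1 else k.-1) else k.
Definition c0 := if M %% 2 == 1 then n - 2 else n - 1.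
Definition aa k i := if i == M.-1 then gg k else if i == 0 then c0 * k
  else if i %% 2 == 1 then k else (n - 1) * k.

Lemma gg_lt k : k < n -> gg k < n.
Proof. by rewrite /gg; repeat case: ifP; lia. Qed.

Lemma gg_inj k k' : k < n -> k' < n -> gg k = gg k' -> k = k'.
Proof. by rewrite /gg; repeat case: ifP; lia. Qed.

Lemma gg_id k : beta <= k -> gg k = k.
Proof. by rewrite /gg; case: ifP; lia. Qed.

Lemma gg_cases k : k < beta ->
  [\/ gg k = k.+1, gg k = k.-1 /\ 0 < k | gg k = 0 /\ k = 2].
Proof.
rewrite /gg => ->; repeat case: ifP => ?.
all: try by constructor 1.
all: try by constructor 3; lia.
all: by constructor 2; lia.
Qed.

Lemma c0_coprime : coprime c0 n.
Proof.
by rewrite /c0; case: ifP => _; [apply: coprime_nm2 | apply: coprime_nm1].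
Qed.

Lemma Pmod k i : 0 < i -> i < M ->
  P aa k i %% n = (c0 * k + (if i %% 2 == 1 then 0 else k)) %% n.
Proof.
elim: i => [//|i IH] _ hi.
case: i IH hi => [|i] IH hi.
  rewrite PS P0 add0n /aa /=.
  have -> : (0 == m') = false by apply/eqP; lia.
  by rewrite addn0.
have IH' := IH isT (ltnW hi).
rewrite PS -(modnDml (P aa k i.+1)) IH' modnDml.
rewrite /aa (_ : (i.+1 == M.-1) = false); last by apply/eqP; lia.
rewrite /=.
case h1 : (i.+1 %% 2 == 1); case h2 : (i.+2 %% 2 == 1); try lia.
  by rewrite addn0.
have -> : c0 * k + k + (n - 1) * k = k * n + (c0 * k + 0) by nia.
by rewrite modnMDl.
Qed.

Lemma Smod k : S m' aa k %% n = ((n - 1) * k + gg k) %% n.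
Proof.
rewrite /S PS -modnDml Pmod //; last by lia.
rewrite modnDml /aa eqxx; congr (_ %% n); congr (_ + _).
rewrite /c0; case: ifP => h; case: ifP => h' //; try lia.
Qed.

Lemma Ha_conc i k k' : i < M -> k < n -> k' < n ->
  aa k i %% n = aa k' i %% n -> k = k'.
Proof.
move=> hi hk hk'; rewrite /aa; case: ifP => _.
  by rewrite !modn_small ?gg_lt //; apply: gg_inj.
case: ifP => _.
  rewrite ![c0 * _]mulnC; apply: mul_inj => //; exact: c0_coprime.
case: ifP => _; first by rewrite !modn_small.
rewrite ![(n - 1) * _]mulnC; apply: mul_inj => //; exact: coprime_nm1.
Qed.

Lemma HS0_conc k : beta <= k -> k < n -> S m' aa k %% n = 0.
Proof.
move=> hb hk; rewrite Smod gg_id //.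
have -> : (n - 1) * k + k = k * n by nia.
by rewrite modnMl.
Qed.

Lemma HS1_conc k : k < beta -> coprime (S m' aa k) n.
Proof.
move=> hb; rewrite -coprime_modl Smod.
case: (gg_cases hb) => [-> | [-> hk] | [-> ->]].
- have -> : (n - 1) * k + k.+1 = k * n + 1 by nia.
  rewrite modnMDl (@modn_small 1) ?coprime1n //; lia.
- have -> : (n - 1) * k + k.-1 = k.-1 * n + (n - 1) by nia.
  rewrite modnMDl (@modn_small (n - 1)) ?coprime_nm1 //; lia.
- have -> : (n - 1) * 2 + 0 = 1 * n + (n - 2) by nia.
  rewrite modnMDl (@modn_small (n - 2)) ?coprime_nm2 //; lia.
Qed.

End Conc.

Theorem mainTheorem3 (M n beta : nat) :
  3 <= M -> 3 <= n -> odd n -> beta <= n -> beta != 1 ->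
  HWP (CMn M n) M (M * n) (n - beta, beta).
Proof.
case: M => [|m'] //; case: n => [|n'] // hM hn ho hb hb1.
have hodd : n'.+1 %% 2 = 1 by rewrite modn2 ho.
apply: (@frame_HWP m' n' beta (aa m' n' beta)) => //.
- by move=> i k k'; apply: Ha_conc.
- by move=> k; apply: HS0_conc.
- by move=> k; apply: HS1_conc.
Qed.
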